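(* Let $n\ge 2$ and $1\le k\le n-1$ be integers, and let $z_1,\dots,z_n$ be indeterminates. Then \[ \Big(\prod_{i=0}^{k-1} i!\Big)^2\, n^{k-1}\,\Delta_{k+1}(H(n)) \;=\; \Delta_k(E(n)). \]
   Context: For $k\ge 0$ let $p_k=\sum_{i=1}^n z_i^k$ be the power sums. The Hermite matrix $H(n)$ is the matrix with entries $H(n)_{i,j}=p_{i+j-2}$ ($i,j\ge 1$). For an (infinite or finite) matrix $F$, $\Delta_k(F)$ denotes the determinant of its upper-left $k\times k$ submatrix. For distinct $i,j\in\{1,\dots,n\}$ and an integer $m\ge 0$, let $e^{(i,j)}_m$ be the elementary symmetric polynomial of degree $m$ in the $n-2$ variables $\{z_l: l\ne i,j\}$ (with $e^{(i,j)}_0=1$ and $e^{(i,j)}_m=0$ if $m>n-2$). $E(n)$ is the infinite matrix with entries, for $r,s\ge 1$, \[ E(n)_{r,s}=(r-1)!\,(s-1)!\sum_{1\le i<j\le n} e^{(i,j)}_{r-1}\,e^{(i,j)}_{s-1}\,(z_i-z_j)^2 . \] *)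

(* Defs.v *)
From HB Require Import structures.
From mathcomp Require Import all_boot all_order all_algebra.
Set Implicit Arguments. Unset Strict Implicit. Unset Printing Implicit Defensive.
Import Order.TTheory GRing.Theory.
Local Open Scope ring_scope.

Definition psum (R : comRingType) (n : nat) (z : 'I_n -> R) (k : nat) : R :=
  \sum_(i < n) z i ^+ k.

(* Upper-left m x m block of the Hermite matrix H(n): entries p_{i+j-2}
   (1-based), i.e. p_{i+j} for 0-based indices i, j < m. *)
Definition hermite_mx (R : comRingType) (n : nat) (z : 'I_n -> R) (m : nat)
  : 'M[R]_m := \matrix_(i < m, j < m) psum z (i + j).

(* e^{(i,j)}_m : elementary symmetric polynomial of degree m in the variables
   z_l, l <> i, j  (equals 1 for m = 0 and 0 for m > n - 2). *)
Definition esym_ij (R : comRingType) (n : nat) (z : 'I_n -> R)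
  (i j : 'I_n) (m : nat) : R :=
  \sum_(S : {set 'I_n} | (#|S| == m) && (S \subset ~: [set i; j]))
     \prod_(l in S) z l.

(* Upper-left m x m block of E(n); 0-based r, s < m correspond to the
   1-based indices r+1, s+1, so (r+1-1)! = r!. *)
Definition E_mx (R : comRingType) (n : nat) (z : 'I_n -> R) (m : nat)
  : 'M[R]_m :=
  \matrix_(r < m, s < m)
    ((r`!)%:R * (s`!)%:R *
     \sum_(i < n) \sum_(j < n | (i < j)%N)
        esym_ij z i j r * esym_ij z i j s * (z i - z j) ^+ 2).

(* Main.v *)
Require Import Defs.
From HB Require Import structures.
From mathcomp Require Import all_boot all_order all_algebra.
From mathcomp Require Import ring.
Import GRing.Theory.
Set Implicit Arguments. Unset Strict Implicit. Unset Printing Implicit Defensive.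
Local Open Scope ring_scope.


Definition eA (R : comRingType) (n : nat) (z : 'I_n -> R) (A : {set 'I_n}) (m : nat) : R :=
  \sum_(S : {set 'I_n} | (#|S| == m) && (S \subset ~: A)) \prod_(l in S) z l.

Lemma eA0 (R : comRingType) n (z : 'I_n -> R) (A : {set 'I_n}) : eA z A 0 = 1.
Proof.
rewrite /eA (bigD1 set0) /=; last by rewrite cards0 sub0set.
rewrite big_set0 big1 ?addr0 // => S /andP[/andP[/eqP/cards0_eq -> _]].
by rewrite eqxx.
Qed.

Lemma subC1 (n : nat) (T : {set 'I_n}) l : (T \subset ~: [set l]) = (l \notin T).
Proof. by rewrite subsetC sub1set in_setC. Qed.

Lemma eA_split (R : comRingType) n (z : 'I_n -> R) (A : {set 'I_n}) (l : 'I_n) m : l \notin A ->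
  eA z A m.+1 = eA z (l |: A) m.+1 + z l * eA z (l |: A) m.
Proof.
move=> lA.
rewrite /eA (bigID (fun S : {set 'I_n} => l \in S)) /= addrC.
congr (_ + _).
  apply: eq_bigl => S.
  by rewrite setCU subsetI subC1 -!andbA [(l \notin S) && _]andbC.
rewrite big_distrr /=.
rewrite (reindex_onto (fun S => l |: S) (fun S => S :\ l)) /=; last first.
  by move=> S /andP[_ lS]; rewrite setD1K.
apply: eq_big => [T|T].
  rewrite setU11 andbT setCU subsetI subC1.
  case lT: (l \in T) => /=.
    rewrite !andbF; apply/negbTE; rewrite negb_and; apply/orP; right.
    by apply/eqP => E; move: lT; rewrite -E setD11.
  rewrite setU1K ?lT // eqxx andbT cardsU1 lT add1n eqSS.
  by rewrite subUset sub1set in_setC lA.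
rewrite setU11 andbT => /andP[/andP[_ _] /eqP E].
have lT : l \notin T by rewrite -E setD11.
by rewrite big_setU1.
Qed.

Lemma g_formula (R : comRingType) n (z : 'I_n -> R) (i : 'I_n) m :
  eA z [set i] m = \sum_(b < m.+1) eA z set0 (m - b) * (- z i) ^+ b.
Proof.
elim: m => [|m IH]; first by rewrite eA0 big_ord1 subn0 eA0 expr0 mulr1.
have := eA_split z m (A := set0) (l := i); rewrite in_set0 setU0 => /(_ isT) H.
have -> : eA z [set i] m.+1 = eA z set0 m.+1 - z i * eA z [set i] m.
  by rewrite H addrK.
rewrite big_ord_recl subn0 expr0 mulr1 IH mulr_sumr -sumrN.
congr (_ + _); apply: eq_bigr => b _.
rewrite lift0 subSS exprS.
move: (eA z set0 (m - b)) ((- z i) ^+ b) (z i) => e s a; ring.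
Qed.

Lemma esym_diff (R : comRingType) n (z : 'I_n -> R) (i j : 'I_n) r : i != j ->
  esym_ij z i j r * (z i - z j) =
  \sum_(c < r.+1) eA z set0 (r - c) * (-1) ^+ c * (z i ^+ c.+1 - z j ^+ c.+1).
Proof.
move=> ij.
have Hj := eA_split z r (l := i) (A := [set j]).
have Hi := eA_split z r (l := j) (A := [set i]).
rewrite in_set1 ij in Hj; rewrite in_set1 eq_sym ij in Hi.
have {Hi} Hi := Hi isT; have {Hj} Hj := Hj isT.
have E : j |: [set i] = [set i; j] by rewrite setUC.
rewrite E in Hi.
have -> : esym_ij z i j r * (z i - z j) = eA z [set j] r.+1 - eA z [set i] r.+1.
  rewrite Hi Hj; change (esym_ij z i j r) with (eA z [set i; j] r).
  move: (eA z [set i; j] r.+1) (eA z [set i; j] r) => x y; ring.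
rewrite !g_formula -sumrB big_ord_recl !expr0 subrr add0r.
apply: eq_bigr => c _; rewrite !lift0 subSS (exprNn (z j)) (exprNn (z i)).
rewrite [(-1) ^+ c.+1]exprS.
move: (eA z set0 (r - c)) ((-1) ^+ c) (z i ^+ c.+1) (z j ^+ c.+1) => e s a b; ring.
Qed.


Lemma pair_sym (R : comRingType) n (F : 'I_n -> 'I_n -> R) :
  \sum_(i < n) \sum_(j < n | (i < j)%N) (F i j + F j i) =
  \sum_(i < n) \sum_(j < n | j != i) F i j.
Proof.
have swap : \sum_(i < n) \sum_(j < n | (j < i)%N) F i j =
            \sum_(i < n) \sum_(j < n | (i < j)%N) F j i.
  rewrite (eq_bigr (fun i : 'I_n => \sum_(j < n) if (j < i)%N then F i j else 0));
    last by move=> i _; rewrite big_mkcond.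
  rewrite exchange_big /=; apply: eq_bigr => i _; by rewrite [RHS]big_mkcond.
under eq_bigr do rewrite big_split.
rewrite big_split /= -swap -big_split.
apply: eq_bigr => i _; rewrite [RHS](bigID (fun j : 'I_n => (i < j)%N)) /=.
congr (_ + _); apply: eq_bigl => j; rewrite -(inj_eq val_inj) /= neq_ltn;
  by case: (ltngtP i j).
Qed.

Lemma offdiag (R : comRingType) n (F : 'I_n -> 'I_n -> R) :
  \sum_(i < n) \sum_(j < n | j != i) F i j =
  \sum_(i < n) \sum_(j < n) F i j - \sum_(i < n) F i i.
Proof.
rewrite -sumrB; apply: eq_bigr => i _.
by rewrite [\sum_(j < n) F i j](bigD1 i) //= addrC addrK.
Qed.

Lemma pair_sum (R : comRingType) n (a b : 'I_n -> R) :
  \sum_(i < n) \sum_(j < n | (i < j)%N) (a i - a j) * (b i - b j) =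
  n%:R * \sum_(i < n) a i * b i - (\sum_(i < n) a i) * (\sum_(i < n) b i).
Proof.
transitivity (\sum_(i < n) \sum_(j < n | (i < j)%N)
   ((a i * b i + a j * b j) - (a i * b j + a j * b i))).
  by apply: eq_bigr => i _; apply: eq_bigr => j _; ring.
under eq_bigr do rewrite sumrB.
rewrite sumrB.
have H1 := pair_sym (fun i j => a i * b i).
have H2 := pair_sym (fun i j => a i * b j).
rewrite /= in H1 H2.
rewrite H1 H2 !offdiag.
under eq_bigr do rewrite sumr_const card_ord.
rewrite sumrMnl -mulr_natl big_distrl /=.
under [in X in _ = _ - X]eq_bigr do rewrite big_distrr.
move: (\sum_(i < n) a i * b i) (\sum_(i < n) \sum_(j < n) a i * b j) => x y.
ring.
Qed.


Lemma rank1_core (R : comRingType) k (a : R) (u v : 'cV[R]_k) (B : 'M[R]_k) :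
  a ^+ k * \det (block_mx (a%:M : 'M_1) v^T u B) = a * \det (a *: B - u *m v^T).
Proof.
have := det_mulmx (block_mx (1%:M : 'M_1) 0 (- u) (a%:M : 'M_k))
                  (block_mx (a%:M : 'M_1) v^T u B).
rewrite det_lblock det1 det_scalar mul1r mulmx_block.
rewrite !mul1mx !mul0mx !addr0 !mulNmx mul_mx_scalar !mul_scalar_mx addNr.
rewrite det_ublock det_scalar1 addrC => <-.
by [].
Qed.

Lemma rank1_det (R : comRingType) k (a : R) (u v : 'cV[R]_k) (B : 'M[R]_k) :
  (0 < k)%N ->
  \det (a *: B - u *m v^T) = a ^+ k.-1 * \det (block_mx (a%:M : 'M_1) v^T u B).
Proof.
case: k u v B => // k u v B _ /=.
pose f := map_mx (@polyC R).
have H := rank1_core ('X : {poly R}) (f _ _ u) (f _ _ v) (f _ _ B).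
rewrite exprS -mulrA in H.
have canX (p q : {poly R}) : 'X * p = 'X * q -> p = q.
  move=> E; apply/polyP => i; have := congr1 (fun r : {poly R} => r`_i.+1) E.
  by rewrite /= !coefXM.
have {H} H := canX _ _ H.
have := congr1 (horner_eval a) H.
rewrite rmorphM rmorphXn /= horner_evalE hornerX -!det_map_mx.
have fK m1 m2 (M : 'M[R]_(m1, m2)) : map_mx (horner_eval a) (f _ _ M) = M.
  by apply/matrixP => i j; rewrite !mxE horner_evalE hornerC.
rewrite map_block_mx map_scalar_mx /= horner_evalE hornerX -map_trmx !fK => ->.
congr (\det _); apply/matrixP => i j.
rewrite !mxE !big_ord1 !mxE horner_evalE !hornerE.
by [].
Qed.


Definition Mmx (R : comRingType) n (z : 'I_n -> R) k : 'M[R]_k :=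
  \matrix_(r < k, s < k) \sum_(i < n) \sum_(j < n | (i < j)%N)
        esym_ij z i j r * esym_ij z i j s * (z i - z j) ^+ 2.

Lemma detE_M (R : comRingType) n (z : 'I_n -> R) k :
  \det (E_mx z k) = (\prod_(i < k) (i`!)%:R) ^+ 2 * \det (Mmx z k).
Proof.
pose d : 'rV[R]_k := \row_(r < k) (r`!)%:R.
have -> : E_mx z k = diag_mx d *m Mmx z k *m diag_mx d.
  apply/matrixP => r s; rewrite mul_mx_diag mul_diag_mx !mxE.
  by rewrite mulrAC.
rewrite !det_mulmx det_diag.
under eq_bigr do rewrite mxE.
by rewrite expr2 mulrAC.
Qed.

Definition Lmx (R : comRingType) n (z : 'I_n -> R) k : 'M[R]_k :=
  \matrix_(r < k, c < k) (if (c <= r)%N then eA z set0 (r - c) * (-1) ^+ c else 0).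

Definition ycol (R : comRingType) n (z : 'I_n -> R) k (i j : 'I_n) : 'cV[R]_k :=
  \col_(c < k) (z i ^+ c.+1 - z j ^+ c.+1).

Definition Nmx (R : comRingType) n (z : 'I_n -> R) k : 'M[R]_k :=
  \sum_(i < n) \sum_(j < n | (i < j)%N) (ycol z k i j *m (ycol z k i j)^T).

Lemma M_LNL (R : comRingType) n (z : 'I_n -> R) k :
  Mmx z k = Lmx z k *m Nmx z k *m (Lmx z k)^T.
Proof.
pose w (i j : 'I_n) : 'cV[R]_k := \col_(r < k) (esym_ij z i j r * (z i - z j)).
have -> : Mmx z k = \sum_(i < n) \sum_(j < n | (i < j)%N) (w i j *m (w i j)^T).
  apply/matrixP => r s; rewrite !mxE summxE; apply: eq_bigr => i _.
  rewrite summxE; apply: eq_bigr => j _; rewrite !mxE big_ord1 !mxE.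
  move: (esym_ij z i j r) (esym_ij z i j s) (z i - z j) => x y t; ring.
have wL i j : i != j -> w i j = Lmx z k *m ycol z k i j.
  move=> ij; apply/matrixP => r x; rewrite !mxE esym_diff //.
  rewrite (big_ord_widen k (fun c => eA z set0 (r - c) * (-1) ^+ c *
                                      (z i ^+ c.+1 - z j ^+ c.+1))) //.
  rewrite big_mkcond; apply: eq_bigr => c _; rewrite !mxE ltnS.
  by case: ifP => _; rewrite ?mul0r.
rewrite /Nmx mulmx_sumr mulmx_suml; apply: eq_bigr => i _.
rewrite mulmx_sumr mulmx_suml; apply: eq_bigr => j ij.
rewrite wL; last by rewrite -(inj_eq val_inj) /= neq_ltn ij.
by rewrite trmx_mul !mulmxA.
Qed.

Lemma detL (R : comRingType) n (z : 'I_n -> R) k :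
  \det (Lmx z k) = \prod_(c < k) (-1) ^+ c.
Proof.
rewrite det_trig; last first.
  by apply/is_trig_mxP => i j ij; rewrite mxE leqNgt ij.
by apply: eq_bigr => c _; rewrite mxE leqnn subnn eA0 mul1r.
Qed.

Lemma detM_N (R : comRingType) n (z : 'I_n -> R) k :
  \det (Mmx z k) = \det (Nmx z k).
Proof.
rewrite M_LNL !det_mulmx det_tr detL mulrAC -expr2 -prodrXl big1 ?mul1r //.
by move=> c _; rewrite -exprM mulnC exprM sqrrN !expr1n.
Qed.


Lemma N_rank1 (R : comRingType) n (z : 'I_n -> R) k :
  Nmx z k = n%:R *: (\matrix_(c < k, d < k) psum z (c.+1 + d.+1))
            - (\col_(c < k) psum z c.+1) *m (\col_(c < k) psum z c.+1)^T.
Proof.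
apply/matrixP => c d; rewrite /Nmx !mxE summxE.
under eq_bigr do rewrite summxE.
under eq_bigr do under eq_bigr do rewrite !mxE big_ord1 !mxE.
rewrite pair_sum big_ord1 !mxE /psum.
by under [in RHS]eq_bigr do rewrite exprD.
Qed.

Lemma hermite_block (R : comRingType) n (z : 'I_n -> R) k :
  hermite_mx z k.+1 =
  block_mx ((n%:R : R)%:M : 'M_1) (\col_(c < k) psum z c.+1)^T
           (\col_(c < k) psum z c.+1) (\matrix_(c < k, d < k) psum z (c.+1 + d.+1)).
Proof.
rewrite -(@submxK _ 1 k 1 k (hermite_mx z k.+1)).
f_equal; apply/matrixP => i j; rewrite !mxE /= ?ord1.
- rewrite mulr1n /psum.
  by under eq_bigr do rewrite expr0; rewrite sumr_const card_ord.
- by rewrite add0n add1n.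
- by rewrite addn0 add1n.
- by rewrite !add1n.
Qed.

Unset Implicit Arguments.

Theorem mainTheorem1 (R : comRingType) (n k : nat) (z : 'I_n -> R) :
  (2 <= n)%N -> (1 <= k)%N -> (k <= n - 1)%N ->
  (\prod_(i < k) (i`!)%:R) ^+ 2 * (n%:R) ^+ (k - 1) * \det (hermite_mx z k.+1)
  = \det (E_mx z k).
Proof.
move=> _ k1 _.
rewrite detE_M detM_N N_rank1 rank1_det // hermite_block subn1 mulrA.
by [].
Qed.
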